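(* Let $\rho$ be a density matrix on $\mathbb{C}^d$ and $H$ a Hermitian operator on $\mathbb{C}^d$, with $F_Q>0$. Then for all $n=1,2,\dots$, $$\frac{\left|B_n^{(\mathsf{Kry})}-F_Q\right|}{F_Q}\le\frac{\left|B_{2n-1}^{(\mathsf{Tay})}-F_Q\right|}{F_Q}.$$
   Context: Write $\rho=\sum_k p_k|k\rangle\langle k|$ (spectral decomposition). The quantum Fisher information is $F_Q=2\sum_{k,l:\,p_k+p_l>0}\frac{(p_k-p_l)^2}{p_k+p_l}|\langle k|H|l\rangle|^2$. Let $\mathcal{X}$ be the real space of Hermitian operators $X$ with $\langle k|X|l\rangle=0$ whenever $p_k=p_l=0$, with inner product $\langle X,Y\rangle_\rho=\mathrm{tr}[\rho(XY+YX)/2]$ and norm $\|X\|_\rho=\sqrt{\langle X,X\rangle_\rho}$. Let $\mathcal{R}_\rho(X)=\frac12(\rho X+X\rho)$ and let $L\in\mathcal{X}$ be the unique solution of $\mathcal{R}_\rho(L)=i[\rho,H]$ (the SLD; $F_Q=\|L\|_\rho^2$). Let $\mathcal{K}_n=\mathrm{span}\{\mathcal{R}_\rho^{k}(i[\rho,H]):k=0,\dots,n-1\}$, let $L_n$ be the $\langle\cdot,\cdot\rangle_\rho$-orthogonal projection of $L$ onto $\mathcal{K}_n$, and $B_n^{(\mathsf{Kry})}=\|L_n\|_\rho^2$ (the $n$-th Krylov bound). The $m$-th Taylor bound is $$B_m^{(\mathsf{Tay})}=2\,\mathrm{tr}\Big(\sum_{l=0}^{m}(\rho\otimes\mathbb{1}-\mathbb{1}\otimes\rho)^2(\mathbb{1}\otimes\mathbb{1}-\rho\otimes\mathbb{1}-\mathbb{1}\otimes\rho)^l\,S\,(H\otimes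 H)\Big),$$ where $\mathbb{1}$ is the identity on $\mathbb{C}^d$ and $S$ is the swap operator on $\mathbb{C}^d\otimes\mathbb{C}^d$. *)

(* Defs.v *)
(* Complex numbers: an arbitrary numClosedFieldType C
   (e.g. complex R for a real-closed / real field R). *)
From HB Require Import structures.
From mathcomp Require Import all_boot all_order all_algebra.
From mathcomp Require Import sesquilinear spectral mxtens.
Set Implicit Arguments. Unset Strict Implicit. Unset Printing Implicit Defensive.
Import Order.TTheory GRing.Theory Num.Theory.
Local Open Scope ring_scope.
Local Open Scope sesquilinear_scope.

Section QFI.
Variables (C : numClosedFieldType) (d : nat).

Definition adjmx (A : 'M[C]_d) : 'M[C]_d := A ^t*.

Definition density_matrix (rho : 'M[C]_d) : Prop :=
  rho \is hermsymmx /\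
  (forall v : 'rV[C]_d, 0 <= (v *m rho *m v ^t*) 0 0) /\
  \tr rho = 1.

Definition is_hermitian (A : 'M[C]_d) : Prop := A \is hermsymmx.

(* Spectral decomposition rho = sum_k p_k |k><k| : the rows of the unitary U
   are the bras <k|, p_k are real (the eigenvalues). *)
Definition spectral_decomposition (rho U : 'M[C]_d) (p : 'I_d -> C) : Prop :=
  U \is unitarymx /\ (forall k, p k \is Num.real) /\
  rho = U ^t* *m diag_mx (\row_k p k) *m U.

Definition mel (U X : 'M[C]_d) (k l : 'I_d) : C := (U *m X *m U ^t*) k l.

Definition FQ (U : 'M[C]_d) (p : 'I_d -> C) (H : 'M[C]_d) : C :=
  2 * \sum_(k < d) \sum_(l < d | 0 < p k + p l)
        ((p k - p l) ^+ 2 / (p k + p l) * `|mel U H k l| ^+ 2).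

Definition inX (U : 'M[C]_d) (p : 'I_d -> C) (X : 'M[C]_d) : Prop :=
  is_hermitian X /\ (forall k l, p k = 0 -> p l = 0 -> mel U X k l = 0).

Definition ipr (rho X Y : 'M[C]_d) : C := \tr (rho *m (X *m Y + Y *m X)) / 2.

Definition Rop (rho X : 'M[C]_d) : 'M[C]_d := 2^-1 *: (rho *m X + X *m rho).

Definition icomm (rho H : 'M[C]_d) : 'M[C]_d := 'i *: (rho *m H - H *m rho).

Definition is_SLD (U : 'M[C]_d) (p : 'I_d -> C) (rho H L : 'M[C]_d) : Prop :=
  inX U p L /\ Rop rho L = icomm rho H.

Definition inKrylov (n : nat) (rho H Y : 'M[C]_d) : Prop :=
  exists c : 'I_n -> C, (forall k, c k \is Num.real) /\
    Y = \sum_(k < n) c k *: iter k (Rop rho) (icomm rho H).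

Definition is_Krylov_proj (n : nat) (rho H L Ln : 'M[C]_d) : Prop :=
  inKrylov n rho H Ln /\
  forall Y, inKrylov n rho H Y -> ipr rho (L - Ln) Y = 0.

Definition BKry (rho Ln : 'M[C]_d) : C := ipr rho Ln Ln.

(* powers of a (not necessarily nonempty-indexed) square matrix *)
Definition mxpow (m : nat) (A : 'M[C]_m) (l : nat) : 'M[C]_m :=
  iter l (mulmx A) 1%:M.

Definition swapmx : 'M[C]_(d * d) :=
  \sum_(a < d) \sum_(b < d) (delta_mx a b *t delta_mx b a).

Definition BTay (rho H : 'M[C]_d) (m : nat) : C :=
  let I := (1%:M : 'M[C]_d) in
  let A := rho *t I - I *t rho in
  let B := (1%:M : 'M[C]_(d * d)) - rho *t I - I *t rho in
  2 * \tr (\sum_(l < m.+1)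
             (A *m A *m mxpow B l *m swapmx *m (H *t H))).

End QFI.

(* Main.v *)
Require Import Defs.
From HB Require Import structures.
From mathcomp Require Import all_boot all_order all_algebra.
From mathcomp Require Import sesquilinear spectral mxtens.
From mathcomp Require Import ring zify.
Set Implicit Arguments. Unset Strict Implicit. Unset Printing Implicit Defensive.
Import Order.TTheory GRing.Theory Num.Theory.
Local Open Scope ring_scope.
Local Open Scope sesquilinear_scope.
Section Eigen.
Variables (C : numClosedFieldType) (d : nat) (U : 'M[C]_d) (p : 'I_d -> C).
Hypotheses (UU : U *m U^t* = 1%:M) (UtU : U^t* *m U = 1%:M).

Definition cj (X : 'M[C]_d) := U *m X *m U^t*.
Definition Dp : 'M[C]_d := diag_mx (\row_k p k).

Lemma cjM X Y : cj (X *m Y) = cj X *m cj Y.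
Proof.
by rewrite /cj !mulmxA -[U *m X *m U^t* *m U]mulmxA UtU mulmx1.
Qed.
Lemma cjD X Y : cj (X + Y) = cj X + cj Y.
Proof. by rewrite /cj mulmxDr mulmxDl. Qed.
Lemma cjB X Y : cj (X - Y) = cj X - cj Y.
Proof. by rewrite /cj mulmxBr mulmxBl. Qed.
Lemma cjZ c X : cj (c *: X) = c *: cj X.
Proof. by rewrite /cj -scalemxAr -scalemxAl. Qed.
Lemma cj_tr X : \tr (cj X) = \tr X.
Proof. by rewrite /cj mxtrace_mulC mulmxA UtU mul1mx. Qed.
Lemma cj_adj X : (cj X)^t* = cj (X^t*).
Proof. by rewrite /cj !trmx_mul !map_mxM trmxCK mulmxA. Qed.

Lemma DmulE (X : 'M[C]_d) k l : (Dp *m X) k l = p k * X k l.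
Proof. by rewrite mul_diag_mx !mxE. Qed.
Lemma mulDE (X : 'M[C]_d) k l : (X *m Dp) k l = X k l * p l.
Proof. by rewrite mul_mx_diag !mxE. Qed.

Lemma ipr_cj rho X Y : ipr rho X Y = ipr (cj rho) (cj X) (cj Y).
Proof. by rewrite /ipr -cjM -!cjM -cjD -cjM cj_tr. Qed.

Lemma ipr_diag X Y :
  ipr Dp X Y = \sum_k \sum_l ((p k + p l) / 2 * (X k l * Y l k)).
Proof.
rewrite /ipr mulmxDr mxtraceD /mxtrace.
have E1 : \sum_k (Dp *m (X *m Y)) k k = \sum_k \sum_l p k * (X k l * Y l k).
  by apply: eq_bigr => k _; rewrite DmulE mxE mulr_sumr.
have E2 : \sum_k (Dp *m (Y *m X)) k k = \sum_k \sum_l p l * (X k l * Y l k).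
  rewrite exchange_big /=; apply: eq_bigr => k _; rewrite DmulE mxE mulr_sumr.
  by apply: eq_bigr => l _; rewrite [Y _ _ * _]mulrC.
rewrite E1 E2 -big_split /= mulr_suml; apply: eq_bigr => k _.
rewrite -big_split /= mulr_suml; apply: eq_bigr => l _.
by rewrite -mulrDl mulrAC.
Qed.

End Eigen.
Section Tens.
Variables (C : numClosedFieldType) (d : nat).

Lemma sum_tens (F : 'I_(d * d) -> C) :
  \sum_i F i = \sum_a \sum_b F (mxtens_index (a, b)).
Proof.
rewrite pair_big /= (reindex (@mxtens_index d d)) /=; last first.
  by exists (@mxtens_unindex d d) => i _; rewrite (mxtens_indexK, mxtens_unindexK).
by apply: eq_bigr => [[a b]].
Qed.

Lemma idx_eq (a b c e : 'I_d) :
  (mxtens_index (a, b) == mxtens_index (c, e)) = (a == c) && (b == e).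
Proof. by rewrite (inj_eq (can_inj (@mxtens_indexK d d))) xpair_eqE. Qed.

Lemma sum_delta (c : 'I_d) (g : 'I_d -> C) :
  \sum_y ((c == y)%:R * g y) = g c.
Proof.
rewrite (bigD1 c) //= eqxx mul1r big1 ?addr0 // => y /negbTE.
by rewrite eq_sym => ->; rewrite mul0r.
Qed.

Lemma tens11 : (1%:M : 'M[C]_d) *t (1%:M : 'M[C]_d) = 1%:M.
Proof.
apply/matrixP => i j; case: (mxtens_indexP i) => a b; case: (mxtens_indexP j) => c e.
rewrite tensmxE !mxE idx_eq.
by case: (a == c); case: (b == e); rewrite ?mulr1 ?mulr0.
Qed.

Lemma swapE a b c e :
  swapmx C d (mxtens_index (a, b)) (mxtens_index (c, e)) = (a == e)%:R * (b == c)%:R.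
Proof.
rewrite /swapmx summxE.
under eq_bigr => x _ do rewrite summxE.
under eq_bigr => x _ do under eq_bigr => y _ do rewrite tensmxE !mxE.
transitivity (\sum_x ((a == x)%:R * ((e == x)%:R * (b == c)%:R)) : C).
  apply: eq_bigr => x _.
  rewrite mulrA -(sum_delta c (fun y => (a == x)%:R * (e == x)%:R * (b == y)%:R)).
  apply: eq_bigr => y _.
  rewrite [e == x]eq_sym [c == y]eq_sym.
  by case: (a == x); case: (y == c); case: (x == e); case: (b == y); rewrite /= ?mulr1 ?mulr0 ?mul0r ?mul1r.
rewrite sum_delta.
by rewrite eq_sym.
Qed.

Lemma sum_deltaR (c : 'I_d) (g : 'I_d -> C) :
  \sum_y (g y * (y == c)%:R) = g c.
Proof.
rewrite -(sum_delta c g); apply: eq_bigr => y _; by rewrite mulrC eq_sym.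
Qed.

Lemma dsum (e c : 'I_d) (F : 'I_d -> 'I_d -> C) :
  \sum_x \sum_y (F x y * ((x == e)%:R * (y == c)%:R)) = F e c.
Proof.
transitivity (\sum_x (F x c * (x == e)%:R)); last exact: sum_deltaR.
apply: eq_bigr => x _.
rewrite -(sum_deltaR c (fun y => F x y * (x == e)%:R)).
by apply: eq_bigr => y _; rewrite mulrA.
Qed.

Variables (U : 'M[C]_d).
Hypotheses (UU : U *m U^t* = 1%:M) (UtU : U^t* *m U = 1%:M).

Definition W := U *t U.
Definition Wt := U^t* *t U^t*.

Lemma WtW : Wt *m W = 1%:M.
Proof. by rewrite /W /Wt tensmx_mul UtU tens11. Qed.
Lemma WWt : W *m Wt = 1%:M.
Proof. by rewrite /W /Wt tensmx_mul UU tens11. Qed.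

Lemma WS : W *m swapmx C d = swapmx C d *m W.
Proof.
apply/matrixP => i j; case: (mxtens_indexP i) => a b; case: (mxtens_indexP j) => c e.
rewrite !mxE !sum_tens.
transitivity (\sum_x \sum_y (U a x * U b y * ((x == e)%:R * (y == c)%:R))).
  by apply: eq_bigr => x _; apply: eq_bigr => y _; rewrite swapE /W tensmxE.
rewrite dsum.
symmetry; transitivity (\sum_x \sum_y ((U x c * U y e) * ((x == b)%:R * (y == a)%:R))).
  apply: eq_bigr => x _; apply: eq_bigr => y _.
  by rewrite swapE /W tensmxE [a == _]eq_sym [b == _]eq_sym; ring.
by rewrite dsum; ring.
Qed.

Definition Atm (r : 'M[C]_d) : 'M[C]_(d * d) := r *t 1%:M - 1%:M *t r.
Definition Btm (r : 'M[C]_d) : 'M[C]_(d * d) := 1%:M - r *t 1%:M - 1%:M *t r.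

Lemma BTayE r h m : BTay r h m =
  2 * \tr (\sum_(l < m.+1) (Atm r *m Atm r *m mxpow (Btm r) l *m swapmx C d *m (h *t h))).
Proof. by []. Qed.

Lemma conj_tens (X Y : 'M[C]_d) :
  (U^t* *m X *m U) *t (U^t* *m Y *m U) = Wt *m (X *t Y) *m W.
Proof. by rewrite /Wt /W !tensmx_mul. Qed.

Lemma cm (X Y : 'M[C]_(d * d)) : Wt *m X *m W *m (Wt *m Y *m W) = Wt *m (X *m Y) *m W.
Proof. by rewrite !mulmxA -[Wt *m X *m W *m Wt]mulmxA WWt mulmx1. Qed.

Lemma SWt : swapmx C d *m Wt = Wt *m swapmx C d.
Proof.
transitivity (Wt *m W *m swapmx C d *m Wt); first by rewrite WtW mul1mx.
by rewrite -(mulmxA Wt) WS mulmxA -mulmxA WWt mulmx1.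
Qed.

Lemma SW (X : 'M[C]_(d * d)) : swapmx C d *m (Wt *m X *m W) = Wt *m (swapmx C d *m X) *m W.
Proof. by rewrite !mulmxA SWt. Qed.

Lemma one_conj : (1%:M : 'M[C]_(d * d)) = Wt *m 1%:M *m W.
Proof. by rewrite mulmx1 WtW. Qed.

Lemma Atm_conj r : Atm (U^t* *m r *m U) = Wt *m Atm r *m W.
Proof.
have E1 : (1%:M : 'M[C]_d) = U^t* *m 1%:M *m U by rewrite mulmx1 UtU.
by rewrite /Atm {1 2}E1 !conj_tens -mulmxBl -mulmxBr.
Qed.

Lemma Btm_conj r : Btm (U^t* *m r *m U) = Wt *m Btm r *m W.
Proof.
have E1 : (1%:M : 'M[C]_d) = U^t* *m 1%:M *m U by rewrite mulmx1 UtU.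
by rewrite /Btm {1 2}E1 !conj_tens {1}one_conj -!mulmxBl -!mulmxBr.
Qed.

Lemma mxpow_conj (M : 'M[C]_(d * d)) l : mxpow (Wt *m M *m W) l = Wt *m mxpow M l *m W.
Proof.
elim: l => [|l IH]; first by rewrite /mxpow /= -one_conj.
by rewrite /mxpow /= -/(mxpow _ l) IH cm.
Qed.

Lemma BTay_conj r h m : BTay (U^t* *m r *m U) (U^t* *m h *m U) m = BTay r h m.
Proof.
rewrite !BTayE Atm_conj Btm_conj conj_tens.
congr (_ * _).
under eq_bigr => l _ do rewrite mxpow_conj !cm -mulmxA SW cm mulmxA.
rewrite -mulmx_suml -mulmx_sumr mxtrace_mulC mulmxA WWt mul1mx.
congr (\tr _); apply: eq_bigr => l _; by rewrite !mulmxA.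
Qed.

End Tens.

Section TayDiag.
Variables (C : numClosedFieldType) (d : nat) (p : 'I_d -> C).

Definition fa (i : 'I_(d * d)) := p (@mxtens_unindex d d i).1.
Definition fb (i : 'I_(d * d)) := p (@mxtens_unindex d d i).2.

Lemma Dt1 : Dp p *t (1%:M : 'M[C]_d) = diag_mx (\row_i fa i).
Proof.
apply/matrixP => i j; case: (mxtens_indexP i) => a b; case: (mxtens_indexP j) => c e.
rewrite tensmxE !mxE idx_eq /fa mxtens_indexK /=.
by case: (a == c); case: (b == e); rewrite /= ?mulr1 ?mulr0 ?mulr1n ?mulr0n ?mul0r.
Qed.

Lemma tD1 : (1%:M : 'M[C]_d) *t Dp p = diag_mx (\row_i fb i).
Proof.
apply/matrixP => i j; case: (mxtens_indexP i) => a b; case: (mxtens_indexP j) => c e.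
rewrite tensmxE !mxE idx_eq /fb mxtens_indexK /=.
by case: (a == c); case: (b == e); rewrite /= ?mulr1 ?mul1r ?mulr0 ?mulr1n ?mulr0n ?mul0r.
Qed.

Lemma mxpow_diag (g : 'rV[C]_(d * d)) l :
  mxpow (diag_mx g) l = diag_mx (\row_i (g 0 i ^+ l)).
Proof.
elim: l => [|l IH].
  by rewrite /mxpow /= -diag_const_mx; congr diag_mx; apply/rowP => i; rewrite !mxE.
rewrite /mxpow /= -/(mxpow _ l) IH mulmx_diag; congr diag_mx; apply/rowP => i.
by rewrite !mxE exprS.
Qed.

Lemma BTay_diag (h : 'M[C]_d) m : BTay (Dp p) h m =
  2 * \sum_a \sum_b ((p a - p b) ^+ 2 * \sum_(l < m.+1) (1 - p a - p b) ^+ l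
                     * (h b a * h a b)).
Proof.
rewrite BTayE.
have AE : Atm (Dp p) = diag_mx (\row_i (fa i - fb i)).
  rewrite /Atm Dt1 tD1 -raddfB; congr diag_mx; apply/rowP => i; by rewrite !mxE.
have BE : Btm (Dp p) = diag_mx (\row_i (1 - fa i - fb i)).
  rewrite /Btm Dt1 tD1 -diag_const_mx -!raddfB; congr diag_mx; apply/rowP => i; by rewrite !mxE.
rewrite AE BE; congr (_ * _).
under eq_bigr => l _ do rewrite mxpow_diag !mulmx_diag -mulmxA.
rewrite raddf_sum /=.
have T l : \tr (diag_mx (\row_j ((\row_j0 ((\row_i (fa i - fb i)) 0 j0 *
                (\row_i (fa i - fb i)) 0 j0)) 0 j * (\row_i ((\row_i (1 - fa i - fb i)) 0 i ^+ l)) 0 j))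
      *m (swapmx C d *m (h *t h))) =
   \sum_a \sum_b ((p a - p b) ^+ 2 * (1 - p a - p b) ^+ l * (h b a * h a b)).
  rewrite /mxtrace sum_tens; apply: eq_bigr => a _; apply: eq_bigr => b _.
  rewrite mul_diag_mx !mxE /fa /fb mxtens_indexK /= sum_tens expr2.
  congr (_ * _).
  transitivity (\sum_x \sum_y ((h x a * h y b) * ((x == b)%:R * (y == a)%:R))).
    apply: eq_bigr => x _; apply: eq_bigr => y _.
    by rewrite swapE tensmxE [a == _]eq_sym [b == _]eq_sym; ring.
  by rewrite dsum.
under eq_bigr => l _ do rewrite T.
rewrite exchange_big /=; apply: eq_bigr => a _.
rewrite exchange_big /=; apply: eq_bigr => b _.
by rewrite mulr_sumr; apply: eq_bigr => l _; rewrite -mulrA. Qed.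

End TayDiag.
Section Kry.
Variables (C : numClosedFieldType) (d : nat) (rho H : 'M[C]_d).

Local Notation K m := (inKrylov m rho H).
Local Notation G := (icomm rho H).
Local Notation R := (Rop rho).

Lemma RopD X Y : R (X + Y) = R X + R Y.
Proof. by rewrite /Rop mulmxDr mulmxDl addrACA scalerDr. Qed.
Lemma Rop0 : R 0 = 0.
Proof. by rewrite /Rop mulmx0 mul0mx addr0 scaler0. Qed.
Lemma RopZ c X : R (c *: X) = c *: R X.
Proof. by rewrite /Rop -scalemxAr -scalemxAl -scalerDr !scalerA mulrC. Qed.
Lemma Rop_sum m (F : 'I_m -> 'M[C]_d) : R (\sum_(k < m) F k) = \sum_(k < m) R (F k).
Proof. exact: (big_morph _ RopD Rop0). Qed.

Lemma inK0 m : K m 0.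
Proof. by exists (fun _ => 0); split => [k|]; rewrite ?rpred0 // big1 // => k _; rewrite scale0r. Qed.

Lemma inKD m X Y : K m X -> K m Y -> K m (X + Y).
Proof.
move=> [c [cr ->]] [e [er ->]]; exists (fun k => c k + e k); split.
  by move=> k; rewrite rpredD.
by rewrite -big_split /=; apply: eq_bigr => k _; rewrite scalerDl.
Qed.

Lemma inKZ m a X : a \is Num.real -> K m X -> K m (a *: X).
Proof.
move=> ar [c [cr ->]]; exists (fun k => a * c k); split.
  by move=> k; rewrite rpredM.
by rewrite scaler_sumr; apply: eq_bigr => k _; rewrite scalerA.
Qed.

Lemma inKB m X Y : K m X -> K m Y -> K m (X - Y).
Proof.
move=> hX hY; apply: inKD => //; rewrite -scaleN1r; apply: inKZ => //.
exact: rpredN1.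
Qed.

Lemma inK_sum m r (F : 'I_r -> 'M[C]_d) : (forall k, K m (F k)) -> K m (\sum_(k < r) F k).
Proof.
move=> hF; elim/big_ind: _ => //; first exact: inK0.
exact: inKD.
Qed.

Lemma inK_mono m m' X : (m <= m')%N -> K m X -> K m' X.
Proof.
move=> le [c [cr ->]].
pose cn (k : nat) : C := if @insub _ (fun k => (k < m)%N) 'I_m k is Some j then c j else 0.
exists (fun k : 'I_m' => cn k); split.
  by move=> k; rewrite /cn; case: insub => [j|]; rewrite ?cr ?rpred0.
transitivity (\sum_(k < m) cn k *: iter k R G).
  by apply: eq_bigr => k _; rewrite /cn valK.
rewrite (big_ord_widen m' (fun k => cn k *: iter k R G)) // big_mkcond /=.
apply: eq_bigr => k _; case: ifP => // km.
by rewrite /cn insubF // scale0r.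
Qed.

Lemma inKR m X : K m X -> K m.+1 (R X).
Proof.
move=> [c [cr ->]].
exists (fun i : 'I_m.+1 => if unlift ord0 i is Some j then c j else 0); split.
  by move=> i; case: unlift => [j|]; rewrite ?cr ?rpred0.
rewrite big_ord_recl /= unlift_none scale0r add0r Rop_sum.
apply: eq_bigr => j _; rewrite liftK RopZ /=.
by rewrite /bump /= add0n.
Qed.

Lemma inKG : K 1 G.
Proof.
exists (fun _ => 1); split => [k|]; first exact: rpred1.
by rewrite big_ord1 scale1r.
Qed.

Definition Tm (X : 'M[C]_d) := X - rho *m X - X *m rho.

Lemma Tm_R X : Tm X = X - 2 *: R X.
Proof. by rewrite /Tm /Rop scalerA divff ?pnatr_eq0 // scale1r opprD addrA. Qed.

Lemma TmD X Y : Tm (X + Y) = Tm X + Tm Y.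
Proof. by rewrite /Tm mulmxDr mulmxDl !opprD [RHS]addrACA; congr (_ + _); rewrite addrACA. Qed.

Lemma TmZ c X : Tm (c *: X) = c *: Tm X.
Proof. by rewrite /Tm -scalemxAr -scalemxAl !scalerBr. Qed.

Lemma iterTD m X Y : iter m Tm (X + Y) = iter m Tm X + iter m Tm Y.
Proof. by elim: m => [|m IH] //=; rewrite IH TmD. Qed.
Lemma iterTZ m c X : iter m Tm (c *: X) = c *: iter m Tm X.
Proof. by elim: m => [|m IH] //=; rewrite IH TmZ. Qed.
Lemma iterTB m X Y : iter m Tm (X - Y) = iter m Tm X - iter m Tm Y.
Proof. by rewrite -scaleN1r iterTD iterTZ scaleN1r. Qed.

Lemma inKT m X : K m X -> K m.+1 (Tm X).
Proof.
move=> hX; rewrite Tm_R; apply: inKB; first exact: (inK_mono (leqnSn m)).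
by apply: inKZ; [exact: realn | exact: inKR].
Qed.

Lemma inKTG m : K m.+1 (iter m Tm G).
Proof. elim: m => [|m IH]; first exact: inKG. by rewrite iterS; apply: inKT. Qed.

Lemma Ystar L n : R L = G -> L - iter n Tm L = 2 *: \sum_(m < n) iter m Tm G.
Proof.
move=> hL; elim: n => [|n IH]; first by rewrite /= subrr big_ord0 scaler0.
rewrite big_ord_recr /= scalerDr -IH -iterS iterSr Tm_R hL iterTB iterTZ.
by rewrite opprB addrA addrAC.
Qed.

Lemma inKYstar n : K n (2 *: \sum_(m < n) iter m Tm G).
Proof.
apply: inKZ; first exact: realn.
by apply: inK_sum => m; apply: (inK_mono (ltn_ord m)); apply: inKTG.
Qed.

Definition herm (X : 'M[C]_d) := X^t* = X.

Lemma herm0 : herm 0.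
Proof. by rewrite /herm linear0 /= map_mx0. Qed.
Lemma hermD X Y : herm X -> herm Y -> herm (X + Y).
Proof. by rewrite /herm => hX hY; rewrite linearD /= map_mxD hX hY. Qed.
Lemma hermZ a X : a \is Num.real -> herm X -> herm (a *: X).
Proof. by rewrite /herm => ha hX; rewrite linearZ /= map_mxZ hX; congr (_ *: _); exact: conj_Creal. Qed.
Lemma hermB X Y : herm X -> herm Y -> herm (X - Y).
Proof.
move=> hX hY; rewrite -scaleN1r; apply: hermD => //; apply: hermZ => //; exact: rpredN1.
Qed.
Lemma hermR X : herm rho -> herm X -> herm (R X).
Proof.
move=> hr hX; rewrite /Rop; apply: hermZ; first by rewrite realV realn.
by rewrite /herm linearD /= map_mxD !trmx_mul !map_mxM hr hX addrC.
Qed.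
Lemma hermG : herm rho -> herm H -> herm G.
Proof.
move=> hr hH; rewrite /herm /icomm linearZ /= map_mxZ linearB /= map_mxB.
by rewrite !trmx_mul !map_mxM hr hH conjCi scaleNr -scalerN opprB.
Qed.
Lemma hermK m X : herm rho -> herm H -> K m X -> herm X.
Proof.
move=> hr hH [c [cr ->]]; elim/big_ind: _ => //; [exact: herm0 | exact: hermD |].
move=> k _; apply: hermZ => //; elim: (k : nat) => [|j IH] /=; first exact: hermG.
exact: hermR.
Qed.

End Kry.
Section Help. Variable C : numClosedFieldType.
Lemma help1 (s w x y i : C) : s != 0 -> i * i = -1 ->
  s / 2 * (2 * i * w * x / s * (2 * i * (- w) * y / s)) = 2 * (w ^+ 2 / s * (x * y)).
Proof.
move=> hs hi.
have -> : s / 2 * (2 * i * w * x / s * (2 * i * (- w) * y / s)) = - (i * i) * (2 * (w ^+ 2 / s * (x * y))).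
  by field.
by rewrite hi opprK mul1r.
Qed.
Lemma help2 (s w x y i X G : C) (n : nat) : s != 0 -> i * i = -1 -> X = 1 - s ->
  X ^+ (n + n) - 1 = (X - 1) * G ->
  s / 2 * (X ^+ n * (2 * i * w * x / s) * (X ^+ n * (2 * i * (- w) * y / s)))
  = 2 * (w ^+ 2 / s * (x * y) - w ^+ 2 * (G * (y * x))).
Proof.
move=> hs hi hX hG.
have eG : G = (1 - X ^+ n * X ^+ n) / s.
  apply: (mulIf hs); rewrite divfK // -exprD -opprB hG hX; ring.
rewrite eG.
have -> : s / 2 * (X ^+ n * (2 * i * w * x / s) * (X ^+ n * (2 * i * (- w) * y / s)))
  = - (i * i) * (2 * (w ^+ 2 / s * (x * y) - w ^+ 2 * ((1 - X ^+ n * X ^+ n) / s * (y * x)))).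
  by field.
by rewrite hi opprK mul1r.
Qed.
End Help.

Section Main.
Variables (C : numClosedFieldType) (d : nat)
  (rho H U : 'M[C]_d) (p : 'I_d -> C) (L : 'M[C]_d) (n : nat) (Ln : 'M[C]_d).
Hypotheses (hrho : density_matrix rho) (hH : is_hermitian H)
  (hsp : spectral_decomposition rho U p) (hL : is_SLD U p rho H L)
  (hn : (0 < n)%N) (hK : is_Krylov_proj n rho H L Ln).

Lemma UU : U *m U^t* = 1%:M.
Proof. by case: hsp => /unitarymxP. Qed.
Lemma UtU : U^t* *m U = 1%:M.
Proof. exact: (mulmx1C UU). Qed.
Lemma rhoE : rho = U^t* *m Dp p *m U.
Proof. by case: hsp => _ [_ ->]. Qed.
Lemma cj_rho : cj U rho = Dp p.
Proof. by rewrite {1}rhoE /cj !mulmxA UU mul1mx -mulmxA UU mulmx1. Qed.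

Lemma herm_of (X : 'M[C]_d) : X \is hermsymmx -> herm X.
Proof. by move/is_hermitianmxP; rewrite expr0 scale1r /herm => E; rewrite -E. Qed.

Lemma herm_rho : herm rho.
Proof. exact: herm_of hrho.1. Qed.
Lemma herm_H : herm H.
Proof. exact: herm_of hH. Qed.

Lemma cj_herm X k l : herm X -> cj U X l k = (cj U X k l)^*.
Proof.
move=> hX; have E : (cj U X)^t* = cj U X by rewrite cj_adj hX.
by rewrite -{1}E !mxE.
Qed.

Lemma p_ge0 k : 0 <= p k.
Proof.
have := hrho.2.1 (row k U).
have -> : (row k U *m rho *m (row k U)^t*) 0 0 = cj U rho k k.
  by rewrite /cj -row_mul !mxE; apply: eq_bigr => j _; rewrite !mxE.
by rewrite cj_rho /Dp !mxE eqxx mulr1n.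
Qed.

Lemma mxaddE (A B : 'M[C]_d) i j : (A + B) i j = A i j + B i j.
Proof. by rewrite mxE. Qed.
Lemma mxoppE (A : 'M[C]_d) i j : (- A) i j = - A i j.
Proof. by rewrite mxE. Qed.
Lemma mxscaleE c (A : 'M[C]_d) i j : (c *: A) i j = c * A i j.
Proof. by rewrite mxE. Qed.

Lemma cjR X k l : cj U (Rop rho X) k l = (p k + p l) / 2 * cj U X k l.
Proof.
rewrite /Rop cjZ cjD !(cjM UtU) cj_rho mxscaleE mxaddE DmulE mulDE.
by ring.
Qed.

Lemma cjG k l : cj U (icomm rho H) k l = 'i * (p k - p l) * cj U H k l.
Proof.
rewrite /icomm cjZ cjB !(cjM UtU) cj_rho mxscaleE !mxaddE mxoppE DmulE mulDE.
by ring.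
Qed.

Lemma cjT X k l : cj U (Tm rho X) k l = (1 - p k - p l) * cj U X k l.
Proof.
rewrite /Tm !cjB !(cjM UtU) cj_rho !mxaddE !mxoppE DmulE mulDE.
by ring.
Qed.

Lemma cjTn N X k l : cj U (iter N (Tm rho) X) k l = (1 - p k - p l) ^+ N * cj U X k l.
Proof. by elim: N => [|N IH] /=; rewrite ?expr0 ?mul1r // cjT IH mulrA exprS. Qed.

Lemma Lpos k l : 0 < p k + p l ->
  cj U L k l = 2 * 'i * (p k - p l) * cj U H k l / (p k + p l).
Proof.
move=> hs; have E := cjR L k l; rewrite hL.2 cjG in E.
have hs0 : p k + p l != 0 by rewrite gt_eqF.
apply: (@mulfI _ ((p k + p l) / 2)).
  by rewrite mulf_neq0 // invr_eq0 pnatr_eq0.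
by rewrite -E; field.
Qed.

Lemma Lzero k l : ~~ (0 < p k + p l) -> [/\ p k = 0, p l = 0 & cj U L k l = 0].
Proof.
move=> hs.
have s0 : p k + p l == 0.
  by move: hs; rewrite lt0r addr_ge0 ?p_ge0 // andbT negbK.
move: s0; rewrite paddr_eq0 ?p_ge0 // => /andP [/eqP hk /eqP hl].
by split => //; apply: hL.1.2.
Qed.

Lemma ipr_sym X Y : ipr rho X Y = ipr rho Y X.
Proof. by rewrite /ipr addrC. Qed.
Lemma ipr_addl X Y Z : ipr rho (X + Y) Z = ipr rho X Z + ipr rho Y Z.
Proof. by rewrite /ipr mulmxDl mulmxDr !mulmxDr !mxtraceD; ring. Qed.
Lemma q_add X Y : ipr rho (X + Y) (X + Y) =
  ipr rho X X + ipr rho Y Y + 2 * ipr rho X Y.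
Proof.
rewrite !ipr_addl ![ipr rho _ (X + Y)]ipr_sym !ipr_addl [ipr rho Y X]ipr_sym; ring.
Qed.

Lemma q_ge0 X : herm X -> 0 <= ipr rho X X.
Proof.
move=> hX; rewrite (ipr_cj UtU) cj_rho ipr_diag.
apply: sumr_ge0 => k _; apply: sumr_ge0 => l _.
rewrite (cj_herm _ _ hX) -normCKC.
by apply: mulr_ge0; [apply: divr_ge0; [apply: addr_ge0; apply: p_ge0|] | apply: exprn_ge0; exact: normr_ge0].
Qed.

Lemma qL : ipr rho L L = FQ U p H.
Proof.
rewrite (ipr_cj UtU) cj_rho ipr_diag /FQ mulr_sumr; symmetry; apply: eq_bigr => k _.
rewrite big_mkcond mulr_sumr; apply: eq_bigr => l _ /=.
case: ifP => hs.
  rewrite (Lpos hs) (@Lpos l k); last by rewrite addrC.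
  rewrite [p l + p k]addrC -[p l - p k]opprB /mel -/(cj U H) (cj_herm k l herm_H) normCK.
  by symmetry; apply: help1; [rewrite gt_eqF | exact: mulCii].
have [_ _ ->] := Lzero (negbT hs).
by rewrite mul0r mulr0 mulr0.
Qed.

Lemma qTL : ipr rho (iter n (Tm rho) L) (iter n (Tm rho) L) = FQ U p H - BTay rho H (2 * n - 1).
Proof.
have hHE : H = U^t* *m cj U H *m U.
  by rewrite /cj !mulmxA UtU mul1mx -mulmxA UtU mulmx1.
have BT : BTay rho H (2 * n - 1) = BTay (Dp p) (cj U H) (2 * n - 1).
  by rewrite {1}rhoE {1}hHE (BTay_conj UU UtU).
have eN : (2 * n - 1).+1 = (n + n)%N by lia.
rewrite BT BTay_diag eN /FQ -mulrBr -sumrB mulr_sumr.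
rewrite (ipr_cj UtU) cj_rho ipr_diag; symmetry; apply: eq_bigr => k _.
rewrite big_mkcond -sumrB mulr_sumr; apply: eq_bigr => l _ /=.
rewrite !cjTn /mel -/(cj U H).
case: ifP => hs.
  rewrite (Lpos hs) (@Lpos l k); last by rewrite addrC.
  rewrite [p l + p k]addrC -[p l - p k]opprB (cj_herm k l herm_H) normCK.
  rewrite [1 - p l - p k]addrAC -mulr_suml.
  symmetry; apply: help2; [by rewrite gt_eqF | exact: mulCii | by rewrite opprD addrA | exact: subrX1].
have [hk hl ->] := Lzero (negbT hs).
by rewrite hk hl; ring.
Qed.

Lemma main_ineq : 0 < FQ U p H ->
  `|BKry rho Ln - FQ U p H| / FQ U p H
    <= `|BTay rho H (2 * n - 1) - FQ U p H| / FQ U p H.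
Proof.
move=> hF.
have hr := herm_rho; have hHh := herm_H.
have hLh : herm L := herm_of hL.1.1.
have [KLn orth] := hK.
have hLn : herm Ln := hermK hr hHh KLn.
have KYs : inKrylov n rho H (L - iter n (Tm rho) L).
  by rewrite (@Ystar _ _ rho H L n hL.2); apply: inKYstar.
have hE : herm (L - Ln) := hermB hLh hLn.
have KD : inKrylov n rho H (Ln - (L - iter n (Tm rho) L)) := inKB KLn KYs.
have hD : herm (Ln - (L - iter n (Tm rho) L)) := hermK hr hHh KD.
have o1 : ipr rho (L - Ln) Ln = 0 := orth Ln KLn.
have o2 : ipr rho (L - Ln) (Ln - (L - iter n (Tm rho) L)) = 0 := orth _ KD.
have e1 : FQ U p H = BKry rho Ln + ipr rho (L - Ln) (L - Ln).
  rewrite -qL /BKry.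
  have LE : L = Ln + (L - Ln) by rewrite addrC subrK.
  by rewrite [in LHS]LE q_add (ipr_sym Ln) o1 mulr0 addr0.
have e2 : FQ U p H - BTay rho H (2 * n - 1) = ipr rho (L - Ln) (L - Ln)
     + ipr rho (Ln - (L - iter n (Tm rho) L)) (Ln - (L - iter n (Tm rho) L)).
  rewrite -qTL.
  have TE : iter n (Tm rho) L = (L - Ln) + (Ln - (L - iter n (Tm rho) L)).
    by rewrite addrA subrK opprB addrC subrK.
  by rewrite [in LHS]TE q_add o2 mulr0 addr0.
have g1 := q_ge0 hE; have g2 := q_ge0 hD.
have -> : BKry rho Ln - FQ U p H = - ipr rho (L - Ln) (L - Ln) by rewrite e1; ring.
have -> : BTay rho H (2 * n - 1) - FQ U p H = - (ipr rho (L - Ln) (L - Ln)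
     + ipr rho (Ln - (L - iter n (Tm rho) L)) (Ln - (L - iter n (Tm rho) L))).
  by rewrite -e2 opprB.
rewrite !normrN !ger0_norm ?addr_ge0 //.
apply: ler_wpM2r; first by rewrite invr_ge0 ltW.
by rewrite lerDl.
Qed.

End Main.

Unset Implicit Arguments.
Set Strict Implicit.
Local Close Scope sesquilinear_scope.

Theorem theorem2 (C : numClosedFieldType) (d : nat)
  (rho H U : 'M[C]_d) (p : 'I_d -> C) (L : 'M[C]_d) (n : nat) (Ln : 'M[C]_d) :
  density_matrix rho ->
  is_hermitian H ->
  spectral_decomposition rho U p ->
  0 < FQ U p H ->
  is_SLD U p rho H L ->
  (0 < n)%N ->
  is_Krylov_proj n rho H L Ln ->
  `|BKry rho Ln - FQ U p H| / FQ U p H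
    <= `|BTay rho H (2 * n - 1) - FQ U p H| / FQ U p H.
Proof.
move=> hrho hH hsp hF hL hn hK.
exact: (main_ineq hrho hH hsp hL hn hK hF).
Qed.
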